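(* Let $(X,d)$ be a metric space and $\emptyset\neq A\subseteq X$. (i) If $\alpha:\mathbb{N}\to\mathbb{N}$ is a I-modulus of total boundedness for $A$, then $\gamma(k):=\alpha(2k+1)+1$ is a II-modulus of total boundedness for $A$. (ii) If $\gamma:\mathbb{N}\to\mathbb{N}$ is a II-modulus of total boundedness for $A$, then $\alpha(k):=\gamma(k)-1$ is a I-modulus of total boundedness for $A$ (in particular, $A$ is totally bounded).
   Context: $\mathbb{N}$ includes $0$. A map $\alpha:\mathbb{N}\to\mathbb{N}$ is a I-modulus of total boundedness for $A$ if for every $k\in\mathbb{N}$ there exist $a_0,\dots,a_{\alpha(k)}\in X$ such that for every $x\in A$ there is $0\le i\le\alpha(k)$ with $d(x,a_i)\le \frac1{k+1}$. A map $\gamma:\mathbb{N}\to\mathbb{N}$ is a II-modulus of total boundedness for $A$ if for every $k\in\mathbb{N}$ and every sequence $(x_n)$ in $A$ there exist $0\le i<j\le\gamma(k)$ with $d(x_i,x_j)\le\frac1{k+1}$. *)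

(* Defs.v *)
From Stdlib Require Export Reals.
Open Scope R_scope.

Definition is_metric {X : Type} (d : X -> X -> R) : Prop :=
  (forall x y, 0 <= d x y) /\
  (forall x y, d x y = 0 <-> x = y) /\
  (forall x y, d x y = d y x) /\
  (forall x y z, d x z <= d x y + d y z).

Definition I_modulus {X : Type} (d : X -> X -> R) (A : X -> Prop)
    (alpha : nat -> nat) : Prop :=
  forall k : nat, exists a : nat -> X,
    forall x, A x -> exists i : nat, (i <= alpha k)%nat /\
      d x (a i) <= 1 / (INR k + 1).

Definition II_modulus {X : Type} (d : X -> X -> R) (A : X -> Prop)
    (gamma : nat -> nat) : Prop :=
  forall (k : nat) (x : nat -> X), (forall n, A (x n)) ->
    exists i j : nat, (i < j)%nat /\ (j <= gamma k)%nat /\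
      d (x i) (x j) <= 1 / (INR k + 1).

(* Main.v *)
Require Import Defs.
From Stdlib Require Import Reals Lra Lia Classical ClassicalEpsilon.
Open Scope R_scope.

Lemma pigeon (m : nat) : forall c : nat -> nat,
  (forall n, (n <= S m)%nat -> (c n <= m)%nat) ->
  exists i j, (i < j)%nat /\ (j <= S m)%nat /\ c i = c j.
Proof.
  induction m as [|m IH]; intros c Hc.
  - exists 0%nat, 1%nat. assert (c 0%nat <= 0)%nat by (apply Hc; lia).
    assert (c 1%nat <= 0)%nat by (apply Hc; lia). repeat split; lia.
  - destruct (classic (exists n, (n <= S m)%nat /\ c n = c (S (S m)))) as
      [[n [Hn Heq]]|Hno].
    + exists n, (S (S m)). repeat split; lia.
    + destruct (Nat.eq_dec (c (S (S m))) (S m)) as [Htop|Htop].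
      * destruct (IH c) as [i [j H]].
        { intros n Hn. assert (c n <= S m)%nat by (apply Hc; lia).
          destruct (Nat.eq_dec (c n) (S m)); [|lia].
          exfalso; apply Hno; exists n; split; lia. }
        exists i, j; repeat split; lia.
      * set (c' := fun n => if Nat.eq_dec (c n) (S m) then c (S (S m)) else c n).
        assert (Hcs : (c (S (S m)) <= S m)%nat) by (apply Hc; lia).
        destruct (IH c') as [i [j [Hij [Hj Heq]]]].
        { intros n Hn. unfold c'. destruct (Nat.eq_dec (c n) (S m)); [lia|].
          assert (c n <= S m)%nat by (apply Hc; lia). lia. }
        exists i, j. repeat split; try lia.
        unfold c' in Heq.
        destruct (Nat.eq_dec (c i) (S m)), (Nat.eq_dec (c j) (S m)); try lia.
        -- exfalso; apply Hno; exists j; split; lia.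
        -- exfalso; apply Hno; exists i; split; lia.
Qed.

Theorem proposition2p4 (X : Type) (d : X -> X -> R) (A : X -> Prop) :
  is_metric d -> (exists x, A x) ->
  (forall alpha : nat -> nat, I_modulus d A alpha ->
     II_modulus d A (fun k => (alpha (2 * k + 1) + 1)%nat)) /\
  (forall gamma : nat -> nat, II_modulus d A gamma ->
     I_modulus d A (fun k => (gamma k - 1)%nat)).
Proof.
  intros [Hpos [Hzero [Hsym Htri]]] [x0 Hx0]. split.
  - intros alpha Ha k x Hx.
    destruct (Ha (2 * k + 1)%nat) as [a Hcov].
    set (eps := 1 / (INR (2 * k + 1) + 1)).
    assert (Hc : forall n, {i | (i <= alpha (2*k+1)%nat)%nat /\ d (x n) (a i) <= eps}).
    { intro n. apply constructive_indefinite_description. apply Hcov, Hx. }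
    destruct (pigeon (alpha (2*k+1)%nat) (fun n => proj1_sig (Hc n))) as [i [j [Hij [Hj Heq]]]].
    { intros n _. exact (proj1 (proj2_sig (Hc n))). }
    exists i, j. repeat split; try lia.
    pose proof (proj2 (proj2_sig (Hc i))) as Hi.
    pose proof (proj2 (proj2_sig (Hc j))) as Hj'.
    cbv beta in Heq. rewrite <- Heq in Hj'.
    set (ci := proj1_sig (Hc i)) in *.
    assert (Heps : 2 * eps = 1 / (INR k + 1)).
    { unfold eps. rewrite plus_INR, mult_INR. simpl INR.
      assert (0 <= INR k) by apply pos_INR. field. lra. }
    specialize (Htri (x i) (a ci) (x j)). rewrite (Hsym (a ci) (x j)) in Htri. lra.
  - intros gamma Hg k.
    set (eps := 1 / (INR k + 1)).
    apply NNPP. intro Hno.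
    assert (HF : forall a : nat -> X, {y | A y /\ forall i, (i <= gamma k - 1)%nat -> d y (a i) > eps}).
    { intro a. apply constructive_indefinite_description.
      apply NNPP. intro H. apply Hno. exists a. intros y Hy.
      apply NNPP. intro H2. apply H. exists y. split; [exact Hy|].
      intros i Hi. apply Rnot_le_gt. intro Hle. apply H2. exists i. auto. }
    set (F := fun a => proj1_sig (HF a)).
    assert (FA : forall a, A (F a)) by (intro a; exact (proj1 (proj2_sig (HF a)))).
    assert (Ffar : forall a i, (i <= gamma k - 1)%nat -> d (F a) (a i) > eps)
      by (intros a; exact (proj2 (proj2_sig (HF a)))).
    set (f := fix f (n : nat) : nat -> X :=
      match n with O => fun _ => x0
      | S n' => fun i => if Nat.ltb i n' then f n' i else F (f n') end).
    assert (Hstab : forall i m, (i < m)%nat -> f m i = F (f i)).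
    { intros i m Him. induction m as [|m IHm]; [lia|].
      simpl. destruct (Nat.ltb i m) eqn:E.
      - apply Nat.ltb_lt in E. apply IHm; lia.
      - apply Nat.ltb_ge in E. assert (i = m) by lia. subst; reflexivity. }
    set (x := fun n => F (f n)).
    destruct (Hg k x (fun n => FA (f n))) as [i [j [Hij [Hj Hd]]]].
    assert (Hfar := Ffar (f j) i ltac:(lia)).
    rewrite (Hstab i j Hij) in Hfar. unfold x in Hd.
    rewrite Hsym in Hd. fold eps in Hd. lra.
Qed.
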